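(* There is an absolute constant $c>0$ such that for every prime $p$ and every divisor $m$ of $p-1$ with $d=(p-1)/m\ge2$, we have $\vartheta(m,p)\ge c\,p^{1/\varphi(d)}$.
   Context: For a prime $p$ and a divisor $m$ of $p-1$, $\mathcal G_m\subseteq\mathbb F_p^*$ is the unique multiplicative subgroup of index $m$ (order $d=(p-1)/m$). For $\lambda\in\mathbb F_p^*$, $\rho(\lambda,p)=\min\{rs: r,s\text{ positive integers},\ r\equiv\lambda s\pmod p\}$, and $\vartheta(m,p)=\min_{\lambda\in\mathcal G_m,\ \lambda\ne1}\rho(\lambda,p)$. $\varphi$ is Euler's function. *)

(* Defs.v *)
From Stdlib Require Import Reals.
From mathcomp Require Import all_boot.

Set Implicit Arguments.
Unset Strict Implicit.
Unset Printing Implicit Defensive.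

(* Elements of F_p^* are represented by naturals 1 <= l < p.
   G_m (index m, order d = (p-1)/m) = { l : l^d = 1 mod p }. *)
Definition in_Gm (m p l : nat) : bool :=
  (0 < l < p) && (l ^ ((p - 1) %/ m) == 1 %[mod p]).

Definition rho_pred (l p : nat) : pred nat := fun n =>
  [exists r : 'I_n.+1, exists s : 'I_n.+1,
     [&& 0 < (r : nat), 0 < (s : nat), r * s == n & r == l * s %[mod p]]].

Lemma rho_ex (l p : nat) : 0 < l -> exists n, rho_pred l p n.
Proof.
move=> hl; exists l; apply/existsP; exists (Ordinal (ltnSn l)).
apply/existsP; exists (@Ordinal l.+1 1 (hl : 1 < l.+1)) => /=.
rewrite hl /=. by rewrite !muln1 !eqxx.
Qed.

Definition rho (l p : nat) : nat :=
  match ltnP 0 l with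
  | LtnNotGeq hl => ex_minn (rho_ex p hl)
  | GeqNotLtn _ => 0
  end.

(* theta(m,p) = min over l in G_m, l <> 1, of rho(l,p).  The default value
   p*p of the big min is never reached when d >= 2 (G_m has a non-identity
   element), since every rho(l,p) <= l < p. *)
Definition theta (m p : nat) : nat :=
  \big[minn/(p * p)]_(2 <= l < p | in_Gm m p l) rho l p.

(* Main.v *)
Require Import Defs.
From Stdlib Require Import Reals Lra.
From mathcomp Require Import all_boot.
From mathcomp Require Import all_order all_algebra all_field.
From mathcomp Require Import ring.
From Stdlib Require Import Lia.
From mathcomp Require Import zify.
Import Order.TTheory GRing.Theory Num.Theory.

Section Alg.
Local Open Scope ring_scope.
Lemma totient_dvd_le (j d : nat) : (0 < d)%N -> (j %| d)%N -> (totient j <= totient d)%N.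
Proof.
move=> d0 jd; have j0 := dvdn_gt0 d0 jd.
rewrite !totientE //.
have pe : perm_eq (primes j) [seq q <- primes d | q \in primes j].
  apply: uniq_perm; first exact: primes_uniq.
    by rewrite filter_uniq // primes_uniq.
  move=> q; rewrite mem_filter; case qj: (q \in primes j) => //=.
  move: qj; rewrite !mem_primes => /and3P[-> _ qj]; rewrite d0 /=; idtac.
  by rewrite (dvdn_trans qj jd).
rewrite (perm_big _ pe) /= big_filter big_mkcond /=.
rewrite big_seq [X in (_ <= X)%N]big_seq; apply: leq_prod => q.
rewrite mem_primes => /and3P[pq _ _].
have q1 := prime_gt1 pq.
case: ifP => _.
  rewrite leq_mul2l; apply/orP; right; rewrite leq_pexp2l ?(ltnW q1) //.
  rewrite -!subn1 leq_sub2r //; exact: dvdn_leq_log.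
by rewrite muln_gt0 expn_gt0 (ltnW q1) -subn1 subn_gt0 q1.
Qed.

Definition homog (R : nzRingType) (P : {poly int}) (e : nat) (x y : R) : R :=
  \sum_(i < e.+1) (P`_i)%:~R * x ^+ i * y ^+ (e - i).

Arguments homog {R}.

Lemma hom_horner (F : fieldType) (P : {poly int}) e (x y : F) :
  y != 0 -> (size P <= e.+1)%N -> homog P e x y = y ^+ e * (map_poly intr P).[x / y].
Proof.
move=> y0 hP; rewrite (@horner_coef_wide _ e.+1); last first.
  by apply: leq_trans (size_poly _ _) hP.
rewrite mulr_sumr; apply: eq_bigr => i _; rewrite coef_map /=.
have ie : (i <= e)%N by rewrite -ltnS ltn_ord.
rewrite (_ : y ^+ e = y ^+ (e - i) * y ^+ i); last by rewrite -exprD subnK.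
rewrite expr_div_n.
have yi : y ^+ i != 0 by rewrite expf_neq0.
field; exact: yi.
Qed.

Lemma hom_intr (R : comNzRingType) (P : {poly int}) e (r s : nat) :
  ((\sum_(i < e.+1) P`_i * (r%:Z) ^+ i * (s%:Z) ^+ (e - i))%:~R : R)
  = homog P e r%:R s%:R.
Proof.
rewrite rmorph_sum; apply: eq_bigr => i _.
by rewrite !rmorphM !rmorphXn /= !pmulrn.
Qed.
Lemma card_coprime j : #|[pred k : 'I_j | coprime k j]| = totient j.
Proof.
rewrite totient_count_coprime -big_mkcond big_mkord -sum1_card.
by apply: eq_bigl => k; rewrite coprime_sym.
Qed.

Lemma hom_C (j r s : nat) : (1 < j)%N -> (0 < r)%N -> (0 < s)%N ->
  homog 'Phi_j (totient j) (r%:R : algC) s%:R != 0 /\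
  `|homog 'Phi_j (totient j) (r%:R : algC) s%:R| <= ((r + s)%:R) ^+ (totient j).
Proof.
move=> j1 r0 s0.
have [z pz] := C_prim_root_exists (ltnW j1).
have sC : (s%:R : algC) != 0 by rewrite pnatr_eq0 -lt0n.
rewrite hom_horner ?size_Cyclotomic // (Cintr_Cyclotomic pz) /cyclotomic horner_prod.
have nz1 : `|z| = 1.
  have : `|z| ^+ j == 1 by rewrite -normrX prim_expr_order // normr1.
  by rewrite pexpr_eq1 ?normr_ge0 ?(ltnW j1) // => /eqP.
split.
  rewrite mulf_neq0 ?expf_neq0 //; apply/prodf_neq0 => k ck.
  rewrite hornerXsubC subr_eq0; apply/negP => /eqP hk.
  have : (r%:R / s%:R : algC) ^+ j == 1.
    by rewrite hk -exprM mulnC exprM (prim_expr_order pz) expr1n.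
  rewrite pexpr_eq1 ?(ltnW j1) ?divr_ge0 ?ler0n // => /eqP h1.
  move: hk; rewrite h1 => /esym/eqP; rewrite -(prim_order_dvd pz) => jk.
  move: ck; rewrite /=; case: (posnP k) => [k0|kpos].
    by rewrite k0 /coprime gcd0n => /eqP jj; rewrite jj in j1.
  by have := dvdn_leq kpos jk; rewrite leqNgt ltn_ord.
rewrite normrM normrX ger0_norm ?ler0n // normr_prod.
apply: (@le_trans _ _ ((s%:R : algC) ^+ totient j * \prod_(k < j | coprime k j) (r%:R / s%:R + 1))).
  rewrite ler_pM2l ?exprn_gt0 ?ltr0n //; apply: ler_prod => k _.
  rewrite normr_ge0 hornerXsubC /=.
  apply: le_trans (ler_normB _ _) _.
  by rewrite normrX nz1 expr1n ger0_norm ?divr_ge0 ?ler0n.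
rewrite prodr_const card_coprime -exprMn_comm; last exact: mulrC.
rewrite natrD (_ : (s%:R : algC) * (r%:R / s%:R + 1) = r%:R + s%:R) //.
by field.
Qed.
Lemma key (p j r s : nat) : prime p -> (1 < j)%N -> (0 < r)%N -> (0 < s)%N -> ~~ (p %| s)%N ->
  (map_poly intr 'Phi_j : {poly 'F_p}).[r%:R / s%:R] = 0 -> (p <= (r + s) ^ (totient j))%N.
Proof.
move=> pp j1 r0 s0 ps hroot.
set e := totient j.
set N : int := \sum_(i < e.+1) 'Phi_j`_i * (r%:Z) ^+ i * (s%:Z) ^+ (e - i).
have [hC1 hC2] := hom_C _ _ _ j1 r0 s0.
have hNC : (N%:~R : algC) = homog 'Phi_j e r%:R s%:R by exact: hom_intr.
have sF : (s%:R : 'F_p) != 0.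
  apply/eqP => h; move: ps; rewrite /dvdn -(val_Fp_nat pp s) h.
  by [].
have hNF : (N%:~R : 'F_p) = 0.
  by rewrite hom_intr hom_horner ?size_Cyclotomic // hroot mulr0.
have N0 : N != 0 by apply: contra hC1 => /eqP N0; rewrite -hNC N0.
have hb : (`|N|%N <= (r + s) ^ e)%N.
  rewrite -lez_nat abszE -(ler_int algC) intr_norm hNC.
  by rewrite -[X in _ <= X]pmulrn natrX.
have pn : (p %| `|N|)%N.
  have : (`|N|%N%:R : 'F_p) = 0.
    rewrite pmulrn abszEsign.
    by rewrite rmorphM /= hNF mulr0.
  move=> h; rewrite /dvdn -(val_Fp_nat pp) h.
  by [].
apply: leq_trans hb; apply: dvdn_leq => //; by rewrite absz_gt0.
Qed.
Lemma Phi1 : 'Phi_1 = 'X - 1.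
Proof. by have := prod_Cyclotomic (ltnSn 0); rewrite /= big_cons big_nil mulr1 expr1. Qed.

Lemma root_ex (p d l : nat) : prime p -> (0 < d)%N -> (1 < l < p)%N -> l ^ d = 1 %[mod p] ->
  exists2 j, (j %| d)%N & (1 < j)%N /\ (map_poly intr 'Phi_j : {poly 'F_p}).[l%:R] = 0.
Proof.
move=> pp d0 /andP[l1 lp] hl.
have hz : (l%:R : 'F_p) ^+ d - 1 = 0.
  by rewrite -natrX -(Fp_nat_mod pp) hl Fp_nat_mod // subrr.
have hz1 : (l%:R : 'F_p) - 1 != 0.
  rewrite subr_eq0; apply/eqP => h.
  have e1 := val_Fp_nat pp l; have e2 := val_Fp_nat pp 1.
  rewrite h in e1.
  have : (l %% p = 1 %% p)%N by rewrite -e1 -e2.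
  rewrite !modn_small ?prime_gt1 // => l1'.
  by rewrite l1' in l1.
have : (map_poly intr ('X^d - 1) : {poly 'F_p}).[l%:R] = 0.
  by rewrite rmorphB /= map_polyXn rmorph1 hornerD hornerN hornerXn hornerC.
rewrite -(prod_Cyclotomic d0) rmorph_prod horner_prod => /eqP.
rewrite prodf_seq_eq0 => /hasP[j jd /eqP hj].
have jd' : (j %| d)%N by rewrite dvdn_divisors.
exists j => //; split => //.
have j0 := dvdn_gt0 d0 jd'.
rewrite ltn_neqAle j0 andbT; apply/eqP => j1.
move: hj; rewrite -j1 Phi1 rmorphB /= map_polyX rmorph1 hornerD hornerN hornerX hornerC.
by move/eqP; rewrite (negbTE hz1).
Qed.

Lemma main_nat (p d l r s : nat) : prime p -> (0 < d)%N -> (1 < l < p)%N -> l ^ d = 1 %[mod p] ->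
  (0 < r)%N -> (0 < s)%N -> r = l * s %[mod p] ->
  (p %| s)%N \/ (p <= (r + s) ^ (totient d))%N.
Proof.
move=> pp d0 hl hd r0 s0 hrs.
case ps: (p %| s)%N; [by left | right].
have [j jd [j1 hj]] := root_ex _ _ _ pp d0 hl hd.
have sF : (s%:R : 'F_p) != 0.
  apply/eqP => h; move: ps; rewrite /dvdn -(val_Fp_nat pp s) h.
  by [].
have hr : (r%:R / s%:R : 'F_p) = l%:R.
  rewrite -(Fp_nat_mod pp r) hrs Fp_nat_mod // natrM mulfK //.
apply: leq_trans (key _ _ _ _ pp j1 r0 s0 (negbT ps) _) _; first by rewrite hr.
by rewrite leq_pexp2l ?addn_gt0 ?r0 // totient_dvd_le.
Qed.
End Alg.

Open Scope nat_scope.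

Lemma Rpow_le_p (p k : nat) : 0 < p -> 0 < k ->
  Rle (Rpower (INR p) (Rinv (INR k))) (INR p).
Proof.
move=> p0 k0.
have hp : Rle 1 (INR p) by apply: (le_INR 1); apply/ssrnat.leP.
have hk : Rle 1 (INR k) by apply: (le_INR 1); apply/ssrnat.leP.
rewrite -{2}(Rpower_1 (INR p)); last lra.
apply: Rle_Rpower => //.
rewrite -Rinv_1; apply: Rinv_le_contravar; lra.
Qed.

Lemma INR_expn (n k : nat) : INR (n ^ k) = pow (INR n) k.
Proof. elim: k => [|k IH] //=; by rewrite expnS mult_INR IH. Qed.

Lemma Rpow_le_pow (p k n : nat) : 0 < p -> 0 < k -> 0 < n -> p <= n ^ k ->
  Rle (Rpower (INR p) (Rinv (INR k))) (INR n).
Proof.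
move=> p0 k0 n0 h.
have hp : Rlt 0 (INR p) by apply: lt_0_INR; apply/ssrnat.ltP.
have hn : Rlt 0 (INR n) by apply: lt_0_INR; apply/ssrnat.ltP.
have hk : Rlt 0 (INR k) by apply: lt_0_INR; apply/ssrnat.ltP.
apply: Rle_trans (Rle_Rpower_l (INR p) (INR (n ^ k)) (Rinv (INR k)) _ _) _.
- by left; apply: Rinv_0_lt_compat.
- split => //; apply: le_INR; exact/ssrnat.leP.
rewrite INR_expn -Rpower_pow // Rpower_mult Rinv_r; last lra.
rewrite Rpower_1 //; lra.
Qed.

Lemma rho_bound (p m l : nat) : prime p -> m %| p - 1 -> 2 <= (p - 1) %/ m ->
  2 <= l < p -> in_Gm m p l ->
  Rle (Rpower (INR p) (Rinv (INR (totient ((p - 1) %/ m))))) (Rmult 2 (INR (rho l p))).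
Proof.
move=> pp hm hd /andP[l2 lp] /andP[_ hGm].
set d := (p - 1) %/ m.
have d0 : 0 < d by apply: leq_trans hd.
have p0 : 0 < p by apply: ltnW (prime_gt1 pp).
have k0 : 0 < totient d by rewrite totient_gt0.
rewrite /rho; case: ltnP => hl; last by move: hl; rewrite leqNgt (leq_trans _ l2).
case: ex_minnP => n /existsP[r /existsP[s /and4P[r0 s0 /eqP rsn /eqP hrs]]] _.
have n0 : 0 < n by rewrite -rsn muln_gt0 r0.
have hnR : Rle 0 (INR n) by apply: pos_INR.
case: (main_nat _ _ l r s pp d0 _ (eqP hGm) r0 s0 hrs) => [|ps|hb].
- by rewrite lp andbT.
- have pr : p %| r.
    by rewrite /dvdn hrs; apply: dvdn_mull.
  have pn : p <= n.
    rewrite -rsn; apply: leq_trans (dvdn_leq r0 pr) _; by rewrite leq_pmulr.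
  apply: Rle_trans (Rpow_le_p _ _ p0 k0) _.
  have : Rle (INR p) (INR n) by apply: le_INR; apply/ssrnat.leP.
  lra.
- have h2 : p <= (2 * n) ^ totient d.
    apply: leq_trans hb _; rewrite leq_exp2r //.
    have : (r : nat) + s <= 2 * (r * s) by rewrite mul2n -addnn leq_add ?leq_pmulr ?leq_pmull.
    by rewrite rsn.
  have := Rpow_le_pow _ _ (2 * n) p0 k0 _ h2.
  rewrite mult_INR /=; apply; by rewrite muln_gt0.
Qed.

Theorem lemma4p1 :
  exists c : R, Rlt 0 c /\
    forall p m : nat, prime p -> m %| p - 1 -> 2 <= (p - 1) %/ m ->
      Rle (Rmult c (Rpower (INR p) (Rinv (INR (totient ((p - 1) %/ m)))))) (INR (theta m p)).
Proof.
exists (Rinv 2); split; first lra.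
move=> p m pp hm hd.
set X := Rpower _ _.
suff : Rle X (Rmult 2 (INR (theta m p))) by lra.
rewrite /theta big_seq_cond.
apply: (big_ind (fun n => Rle X (Rmult 2 (INR n)))).
- have p0 : 0 < p by apply: ltnW (prime_gt1 pp).
  have k0 : 0 < totient ((p - 1) %/ m) by rewrite totient_gt0; apply: leq_trans hd.
  apply: Rle_trans (Rpow_le_p _ _ p0 k0) _.
  rewrite mult_INR.
  have : Rle 1 (INR p) by apply: (le_INR 1); apply/ssrnat.leP.
  nra.
- move=> x y hx hy; rewrite /minn; by case: ifP.
- move=> l /andP[]; rewrite mem_index_iota => hl hG.
  exact: rho_bound.
Qed.
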